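(* Let $(X,\rho,\mu)$ be a space of homogeneous type. Then $X$ has infinitely many points if and only if for every $N>0$ there exist balls $B_0$ and $B_1$ in $X$ such that $\mu(B_1)>N\mu(B_0)$.
   Context: A space of homogeneous type $(X,\rho,\mu)$: $\rho$ is a quasi-metric on $X$, i.e. it satisfies the axioms of a metric except that the triangle inequality is replaced by $\rho(x,y)\le A_0(\rho(x,z)+\rho(z,y))$ for some constant $A_0\ge 1$; balls are $B(x,r)=\{y\in X:\rho(x,y)<r\}$; $\mu$ is a positive Borel measure defined on a $\sigma$-algebra containing the balls, with the doubling property: there is $C\ge1$ such that $0<\mu(B(x,2r))\le C\mu(B(x,r))<\infty$ for all $x\in X$, $r>0$. The smallest such $C$ is the doubling constant $C_\mu$. *)

(* Defs.v *)
From Stdlib Require Import Reals.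
Open Scope R_scope.

Record quasi_metric (X : Type) (rho : X -> X -> R) (A0 : R) : Prop := {
  qm_A0 : 1 <= A0;
  qm_nonneg : forall x y, 0 <= rho x y;
  qm_zero : forall x y, rho x y = 0 <-> x = y;
  qm_sym : forall x y, rho x y = rho y x;
  qm_tri : forall x y z, rho x y <= A0 * (rho x z + rho z y)
}.

Definition ball {X : Type} (rho : X -> X -> R) (x : X) (r : R) : X -> Prop :=
  fun y => rho x y < r.

Record sigma_algebra (X : Type) (M : (X -> Prop) -> Prop) : Prop := {
  sa_empty : M (fun _ => False);
  sa_compl : forall A, M A -> M (fun x => ~ A x);
  sa_union : forall A : nat -> X -> Prop, (forall n, M (A n)) ->
               M (fun x => exists n, A n x)
}.

(* Positive measure on M with values in [0, +oo]; [None] encodes +oo. *)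
Record measure (X : Type) (M : (X -> Prop) -> Prop) (mu : (X -> Prop) -> option R)
  : Prop := {
  me_empty : mu (fun _ => False) = Some 0;
  me_nonneg : forall A a, M A -> mu A = Some a -> 0 <= a;
  me_sigma_add : forall A : nat -> X -> Prop,
    (forall n, M (A n)) ->
    (forall i j, i <> j -> forall x, A i x -> A j x -> False) ->
    forall l, mu (fun x => exists n, A n x) = Some l <->
      exists f : nat -> R, (forall n, mu (A n) = Some (f n)) /\
                           Un_cv (fun n => sum_f_R0 f n) l
}.

Record homogeneous_type (X : Type) (rho : X -> X -> R) (A0 : R)
  (M : (X -> Prop) -> Prop) (mu : (X -> Prop) -> option R) (C : R) : Prop := {
  ht_qm : quasi_metric X rho A0;
  ht_sa : sigma_algebra X M;
  ht_measure : measure X M mu;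
  ht_balls : forall x r, 0 < r -> M (ball rho x r);
  ht_C : 1 <= C;
  ht_doubling : forall x r, 0 < r -> exists m m2,
      mu (ball rho x r) = Some m /\ mu (ball rho x (2 * r)) = Some m2 /\
      0 < m2 /\ m2 <= C * m
}.

Definition finite_type (X : Type) : Prop := exists l : list X, forall x, List.In x l.

(* Main.v *)
Require Import Defs.
From Stdlib Require Import Reals Lra Lia List Classical FunctionalExtensionality PropExtensionality.
Open Scope R_scope.

Lemma pred_ext {X : Type} (P Q : X -> Prop) : (forall x, P x <-> Q x) -> P = Q.
Proof. intros H; apply functional_extensionality; intro x; apply propositional_extensionality; auto. Qed.

Lemma sum_shift (f : nat -> R) n : sum_f_R0 f (S n) = f 0%nat + sum_f_R0 (fun i => f (S i)) n.
Proof. induction n; simpl in *; lra. Qed.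

Section Meas.
Variables (X : Type) (M : (X -> Prop) -> Prop) (mu : (X -> Prop) -> option R).
Hypothesis sa : sigma_algebra X M.
Hypothesis me : measure X M mu.

Lemma M_diff A B : M A -> M B -> M (fun x => A x /\ ~ B x).
Proof.
  intros HA HB.
  assert (H := sa_union X M sa (fun n => match n with 0%nat => fun x => ~ A x | _ => B end)).
  assert (H1 : M (fun x => exists n, (match n with 0%nat => fun x => ~ A x | _ => B end) x)).
  { apply H. intros [|n]; [apply (sa_compl X M sa); auto | auto]. }
  apply (sa_compl X M sa) in H1.
  replace (fun x => A x /\ ~ B x) with
    (fun x => ~ (exists n, (match n with 0%nat => fun x => ~ A x | _ => B end) x)); auto.
  apply pred_ext; intro x; split.
  - intros Hn; split.
    + apply NNPP; intro. apply Hn. exists 0%nat. auto.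
    + intro. apply Hn. exists 1%nat. auto.
  - intros [Ha Hb] [[|n] Hn]; auto.
Qed.

Lemma family_bound (A : nat -> X -> Prop) B b :
  (forall n, M (A n)) -> (forall i j, i <> j -> forall x, A i x -> A j x -> False) ->
  (forall n x, A n x -> B x) -> M B -> mu B = Some b ->
  exists f, (forall n, mu (A n) = Some (f n)) /\ (forall n, 0 <= f n) /\
            forall n, sum_f_R0 f n <= b.
Proof.
  intros HM Hd Hs HB Hb.
  pose (U := fun x => exists n, A n x).
  assert (HU : M U) by (apply (sa_union X M sa); auto).
  pose (A' := fun n => match n with 0%nat => fun x => B x /\ ~ U x | S m => A m end).
  assert (HM' : forall n, M (A' n)).
  { intros [|n]; simpl; auto. apply M_diff; auto. }
  assert (Hd' : forall i j, i <> j -> forall x, A' i x -> A' j x -> False).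
  { intros [|i] [|j] Hij x; simpl; intros.
    - lia.
    - destruct H as [_ H]; apply H; exists j; auto.
    - destruct H0 as [_ H0]; apply H0; exists i; auto.
    - apply (Hd i j) with x; auto. }
  assert (Heq : (fun x => exists n, A' n x) = B).
  { apply pred_ext; intro x; split.
    - intros [[|n] Hn]; simpl in Hn; [tauto | eapply Hs; eauto].
    - intros Hx. destruct (classic (U x)) as [[n Hn]|Hn].
      + exists (S n); auto.
      + exists 0%nat; simpl; auto. }
  assert (Hb' : mu (fun x => exists n, A' n x) = Some b) by (rewrite Heq; auto).
  apply (me_sigma_add X M mu me A' HM' Hd' b) in Hb'.
  destruct Hb' as [f' [Hf' Hcv]].
  assert (Hnn : forall n, 0 <= f' n).
  { intro n. apply (me_nonneg X M mu me (A' n)); auto. }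
  assert (Hg : Un_growing (fun n => sum_f_R0 f' n)).
  { intro n; simpl. specialize (Hnn (S n)); lra. }
  exists (fun n => f' (S n)). split; [|split].
  - intro n. apply (Hf' (S n)).
  - intro n; apply Hnn.
  - intro n. pose proof (growing_ineq _ _ Hg Hcv (S n)) as G.
    rewrite sum_shift in G. specialize (Hnn 0%nat). lra.
Qed.

Lemma mono A B b : M A -> M B -> (forall x, A x -> B x) -> mu B = Some b ->
  exists a, mu A = Some a /\ 0 <= a /\ a <= b.
Proof.
  intros HA HB Hs Hb.
  destruct (family_bound (fun n => match n with 0%nat => A | _ => fun _ => False end) B b)
    as [f [Hf [Hn Hsum]]]; auto.
  - intros [|n]; auto. apply (sa_empty X M sa).
  - intros [|i] [|j]; simpl; intros; auto.
  - intros [|n] x; simpl; auto; tauto.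
  - exists (f 0%nat). split; [apply (Hf 0%nat)|]. split; auto. apply (Hsum 0%nat).
Qed.
End Meas.

Definition sumlist (l : list R) := fold_right Rplus 0 l.

Lemma sumlist_ge {X} (g : X -> R) l x : In x l -> (forall y, 0 <= g y) -> g x <= sumlist (map g l).
Proof.
  induction l as [|a l IH]; simpl; [tauto|]. intros [->|Hin] Hg.
  - specialize (IH). assert (0 <= sumlist (map g l)).
    { clear IH. induction l as [|b l IH2]; simpl; [lra|]. specialize (Hg b); lra. }
    lra.
  - specialize (IH Hin Hg). specialize (Hg a). lra.
Qed.

Lemma sumlist_nonneg {X} (g : X -> R) l : (forall y, 0 <= g y) -> 0 <= sumlist (map g l).
Proof. intros Hg; induction l; simpl; [lra|]. specialize (Hg a); lra. Qed.

Section HT.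
Variables (X : Type) (rho : X -> X -> R) (A0 : R) (M : (X -> Prop) -> Prop)
  (mu : (X -> Prop) -> option R) (C : R).
Hypothesis H : homogeneous_type X rho A0 M mu C.

Lemma ball_meas x r : 0 < r -> exists m, mu (ball rho x r) = Some m /\ 0 < m.
Proof.
  intros Hr. destruct (ht_doubling _ _ _ _ _ _ H x r Hr) as [m [m2 [E1 [E2 [P Q]]]]].
  exists m; split; auto. pose proof (ht_C _ _ _ _ _ _ H).
  destruct (Rle_or_lt m 0); auto. assert (C * m <= 0) by nra. lra.
Qed.

Lemma ball_mono x r y s : 0 < r -> 0 < s -> (forall w, ball rho x r w -> ball rho y s w) ->
  forall m n, mu (ball rho x r) = Some m -> mu (ball rho y s) = Some n -> m <= n.
Proof.
  intros Hr Hs Hsub m n Hm Hn.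
  destruct (mono X M mu (ht_sa _ _ _ _ _ _ H) (ht_measure _ _ _ _ _ _ H)
     (ball rho x r) (ball rho y s) n) as [a [Ha [_ Hle]]]; auto.
  - apply (ht_balls _ _ _ _ _ _ H); auto.
  - apply (ht_balls _ _ _ _ _ _ H); auto.
  - rewrite Hm in Ha; injection Ha; intros; subst; auto.
Qed.

Definition delta (l : list X) (x : X) : R :=
  fold_right (fun y acc => Rmin acc (if Req_EM_T (rho x y) 0 then 1 else rho x y)) 1 l.

Lemma delta_pos l x : 0 < delta l x.
Proof.
  pose proof (qm_nonneg _ _ _ (ht_qm _ _ _ _ _ _ H)) as Hn.
  induction l; simpl; [lra|]. destruct (Req_EM_T (rho x a) 0).
  - apply Rmin_glb_lt; lra.
  - apply Rmin_glb_lt; auto. specialize (Hn x a); lra.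
Qed.

Lemma delta_le l x y : In y l -> x <> y -> delta l x <= rho x y.
Proof.
  intros Hin Hxy. induction l; simpl in *; [tauto|]. destruct Hin as [->|Hin].
  - destruct (Req_EM_T (rho x y) 0) as [e|e].
    + exfalso; apply Hxy. apply (qm_zero _ _ _ (ht_qm _ _ _ _ _ _ H)); auto.
    + apply Rmin_r.
  - eapply Rle_trans; [apply Rmin_l| auto].
Qed.

Lemma fin_dir : finite_type X ->
  ~ (forall N : R, 0 < N ->
     exists (x0 : X) (r0 : R) (x1 : X) (r1 : R) (m0 m1 : R),
       0 < r0 /\ 0 < r1 /\
       mu (ball rho x0 r0) = Some m0 /\ mu (ball rho x1 r1) = Some m1 /\
       m1 > N * m0).
Proof.
  intros [l Hl] HN.
  pose proof (ht_qm _ _ _ _ _ _ H) as Q.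
  destruct (HN 1 ltac:(lra)) as [c _].
  pose (Rb := 1 + sumlist (map (rho c) l)).
  assert (HRb : 0 < Rb).
  { pose proof (sumlist_nonneg (rho c) l (qm_nonneg _ _ _ Q c)). unfold Rb; lra. }
  assert (Hall : forall w, ball rho c Rb w).
  { intro w. unfold ball, Rb. pose proof (sumlist_ge (rho c) l w (Hl w) (qm_nonneg _ _ _ Q c)). lra. }
  destruct (ball_meas c Rb HRb) as [Mt [HMt HMtp]].
  pose (mval := fun x => match mu (ball rho x (delta l x)) with Some m => m | None => 1 end).
  assert (Hmv : forall x, mu (ball rho x (delta l x)) = Some (mval x) /\ 0 < mval x).
  { intro x. destruct (ball_meas x (delta l x) (delta_pos l x)) as [m [E P]].
    unfold mval; rewrite E; auto. }
  pose (S := sumlist (map (fun x => / mval x) l)).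
  assert (HS : forall x, / mval x <= S).
  { intro x. apply (sumlist_ge (fun x => / mval x)); auto. intro y. destruct (Hmv y) as [_ P].
    left; apply Rinv_0_lt_compat; auto. }
  destruct (HN (Mt * S + 1)) as (x0 & r0 & x1 & r1 & m0 & m1 & Hr0 & Hr1 & E0 & E1 & Hgt).
  { assert (0 <= S). { specialize (HS c). destruct (Hmv c) as [_ P].
      pose proof (Rinv_0_lt_compat _ P). lra. } nra. }
  assert (Hm1 : m1 <= Mt) by (eapply (ball_mono x1 r1 c Rb); eauto).
  pose (s := Rmin r0 (delta l x0)).
  assert (Hs : 0 < s) by (apply Rmin_glb_lt; auto; apply delta_pos).
  assert (Heq : ball rho x0 s = ball rho x0 (delta l x0)).
  { apply pred_ext; intro w; unfold ball, s. split; intro Hw.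
    - eapply Rlt_le_trans; eauto; apply Rmin_r.
    - destruct (classic (x0 = w)) as [<-|Hne].
      + replace (rho x0 x0) with 0 by (symmetry; apply (qm_zero _ _ _ Q); auto). auto.
      + pose proof (delta_le l x0 w (Hl w) Hne). lra. }
  destruct (Hmv x0) as [Ev Pv].
  assert (Hm0 : mval x0 <= m0).
  { apply (ball_mono x0 s x0 r0); auto.
    - intro w; unfold ball, s; intro; eapply Rlt_le_trans; eauto; apply Rmin_l.
    - rewrite Heq; auto. }
  specialize (HS x0).
  assert (Hk : Mt <= Mt * S * m0).
  { assert (Mt * (/ mval x0 * mval x0) <= Mt * (S * m0)).
    { apply Rmult_le_compat_l; [lra|]. apply Rmult_le_compat; auto; [| lra].
      left; apply Rinv_0_lt_compat; auto. }
    rewrite Rinv_l in H0 by lra. lra. }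
  nra.
Qed.
End HT.

Section HT3.
Variables (X : Type) (rho : X -> X -> R) (A0 : R) (M : (X -> Prop) -> Prop)
  (mu : (X -> Prop) -> option R) (C : R).
Hypothesis H : homogeneous_type X rho A0 M mu C.

Fixpoint dmin (z : X) (p : nat -> X) (n : nat) : R :=
  match n with 0%nat => 1 | S m => Rmin (dmin z p m) (rho z (p m)) end.

Lemma dmin_pos z p n : (forall i, (i < n)%nat -> 0 < rho z (p i)) -> 0 < dmin z p n.
Proof.
  induction n; simpl; intros; [lra|]. apply Rmin_glb_lt; auto.
Qed.

Lemma dmin_le z p n i : (i < n)%nat -> dmin z p n <= rho z (p i).
Proof.
  induction n; simpl; intros; [lia|].
  destruct (Nat.eq_dec i n) as [->|].
  - apply Rmin_r.
  - eapply Rle_trans; [apply Rmin_l| apply IHn; lia].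
Qed.

Lemma build : ~ finite_type X -> forall (c : X) n, exists p r R,
  0 < r /\ 0 < R /\
  (forall i j, (i < n)%nat -> (j < n)%nat -> i <> j -> forall w,
      ball rho (p i) r w -> ball rho (p j) r w -> False) /\
  (forall i, (i < n)%nat -> forall w, ball rho (p i) r w -> ball rho c R w).
Proof.
  intros Hinf c. pose proof (ht_qm _ _ _ _ _ _ H) as Q.
  pose proof (qm_A0 _ _ _ Q) as HA.
  induction n as [|n IH].
  - exists (fun _ => c), 1, 1. repeat split; try lra; intros; lia.
  - destruct IH as (p & r & R & Hr & HR & Hd & Hc).
    destruct (classic (exists z, ~ In z (map p (seq 0 n)))) as [[z Hz]|Hno].
    2:{ exfalso; apply Hinf. exists (map p (seq 0 n)). intro x.
        apply NNPP; intro; apply Hno; eauto. }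
    assert (Hzp : forall i, (i < n)%nat -> z <> p i).
    { intros i Hi ->. apply Hz. apply in_map. apply in_seq. lia. }
    assert (Hpos : forall i, (i < n)%nat -> 0 < rho z (p i)).
    { intros i Hi. pose proof (qm_nonneg _ _ _ Q z (p i)).
      destruct H0 as [|E]; auto. exfalso; apply (Hzp i Hi).
      apply (qm_zero _ _ _ Q); auto. }
    pose (D := dmin z p n).
    assert (HD : 0 < D) by (apply dmin_pos; auto).
    pose (r' := Rmin r (D / (2 * A0))).
    assert (Hr' : 0 < r').
    { apply Rmin_glb_lt; auto. apply Rdiv_lt_0_compat; lra. }
    assert (Hrr : r' <= r) by apply Rmin_l.
    assert (HrD : 2 * A0 * r' <= D).
    { assert (r' <= D / (2 * A0)) by apply Rmin_r.
      apply Rmult_le_compat_l with (r := 2 * A0) in H0; [|lra].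
      replace (2 * A0 * (D / (2 * A0))) with D in H0 by (field; lra). lra. }
    pose (p' := fun i => if Nat.eqb i n then z else p i).
    pose (R' := Rmax R (A0 * (rho c z + r') + 1)).
    exists p', r', R'. split; [auto|split].
    { unfold R'. eapply Rlt_le_trans; [apply HR| apply Rmax_l]. }
    assert (Hnew : forall j, (j < n)%nat -> forall w, ball rho z r' w -> ball rho (p j) r' w -> False).
    { intros j Hj w B1 B2. unfold ball in *.
      pose proof (qm_tri _ _ _ Q z (p j) w).
      rewrite (qm_sym _ _ _ Q w (p j)) in H0.
      pose proof (dmin_le z p n j Hj). fold D in H1.
      assert (A0 * (rho z w + rho (p j) w) < A0 * (2 * r')) by (apply Rmult_lt_compat_l; lra). lra. }
    split.
    + intros i j Hi Hj Hij w. unfold p'.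
      destruct (Nat.eqb_spec i n); destruct (Nat.eqb_spec j n).
      * lia.
      * intros; apply (Hnew j) with w; auto; lia.
      * intros; apply (Hnew i) with w; auto; lia.
      * intros B1 B2. apply (Hd i j) with w; try lia; auto; unfold ball in *; lra.
    + intros i Hi w. unfold p'. destruct (Nat.eqb_spec i n).
      * unfold ball, R'. intros Bw. pose proof (qm_tri _ _ _ Q c w z).
        pose proof (Rmax_r R (A0 * (rho c z + r') + 1)).
        rewrite (qm_sym _ _ _ Q z w) in Bw.
        assert (A0 * (rho c z + rho w z) <= A0 * (rho c z + r')) by (apply Rmult_le_compat_l; lra).
        rewrite (qm_sym _ _ _ Q z w) in *. lra.
      * intros Bw. assert (ball rho c R w).
        { apply (Hc i); [lia|]. unfold ball in *; lra. }
        unfold ball, R' in *. pose proof (Rmax_l R (A0 * (rho c z + r') + 1)). lra.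
Qed.
End HT3.

Lemma sum_lb (f : nat -> R) a n : (forall i, (i <= n)%nat -> a <= f i) -> INR (S n) * a <= sum_f_R0 f n.
Proof.
  induction n; intros Hf; simpl.
  - specialize (Hf 0%nat (le_n 0)); lra.
  - assert (INR (S n) * a <= sum_f_R0 f n) by (apply IHn; intros; apply Hf; lia).
    specialize (Hf (S n) (le_n _)). rewrite S_INR in *. destruct n; simpl in *; lra.
Qed.

Lemma inf_dir (X : Type) (rho : X -> X -> R) (A0 : R)
  (M : (X -> Prop) -> Prop) (mu : (X -> Prop) -> option R) (C : R) :
  homogeneous_type X rho A0 M mu C -> ~ finite_type X ->
   forall N : R, 0 < N ->
     exists (x0 : X) (r0 : R) (x1 : X) (r1 : R) (m0 m1 : R),
       0 < r0 /\ 0 < r1 /\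
       mu (ball rho x0 r0) = Some m0 /\ mu (ball rho x1 r1) = Some m1 /\
       m1 > N * m0.
Proof.
  intros H Hinf N HN. apply NNPP; intro Hno.
  destruct (classic (exists z : X, True)) as [[c _]|Hne].
  2:{ apply Hinf. exists nil. intro x; exfalso; apply Hne; eauto. }
  destruct (INR_unbounded N) as [k Hk].
  destruct (build X rho A0 M mu C H Hinf c k) as (p & r & R & Hr & HR & Hd & Hc).
  destruct (ball_meas X rho A0 M mu C H c R HR) as [mB [EB PB]].
  pose (F := fun i => if Nat.ltb i k then ball rho (p i) r else fun _ : X => False).
  pose proof (ht_sa _ _ _ _ _ _ H) as sa.
  destruct (family_bound X M mu sa (ht_measure _ _ _ _ _ _ H) F (ball rho c R) mB)
    as [f [Hf [Hfn Hsum]]]; auto.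
  - intro n; unfold F; destruct (Nat.ltb n k); [apply (ht_balls _ _ _ _ _ _ H); auto|apply (sa_empty _ _ sa)].
  - intros i j Hij x; unfold F.
    destruct (Nat.ltb_spec i k); destruct (Nat.ltb_spec j k); try tauto.
    apply (Hd i j); auto.
  - intros n x; unfold F; destruct (Nat.ltb_spec n k); [apply Hc; auto| tauto].
  - apply (ht_balls _ _ _ _ _ _ H); auto.
  - assert (Hlb : forall i, (i < k)%nat -> mB <= N * f i).
    { intros i Hi. specialize (Hf i). unfold F in Hf.
      rewrite (proj2 (Nat.ltb_lt i k) Hi) in Hf.
      apply Rnot_gt_le. intro G. apply Hno. exists (p i), r, c, R, (f i), mB. auto. }
    destruct k as [|k'].
    + simpl in Hk; lra.
    + assert (INR (S k') * (mB / N) <= sum_f_R0 f k').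
      { apply sum_lb. intros i Hi. specialize (Hlb i ltac:(lia)).
        apply Rmult_le_reg_l with N; auto. replace (N * (mB / N)) with mB by (field; lra). auto. }
      specialize (Hsum k').
      assert (INR (S k') * (mB / N) > N * (mB / N)).
      { apply Rmult_gt_compat_r; auto. apply Rdiv_lt_0_compat; auto. }
      replace (N * (mB / N)) with mB in H1 by (field; lra). lra.
Qed.

Theorem lemma2p3 (X : Type) (rho : X -> X -> R) (A0 : R)
  (M : (X -> Prop) -> Prop) (mu : (X -> Prop) -> option R) (C : R) :
  homogeneous_type X rho A0 M mu C ->
  (~ finite_type X <->
   forall N : R, 0 < N ->
     exists (x0 : X) (r0 : R) (x1 : X) (r1 : R) (m0 m1 : R),
       0 < r0 /\ 0 < r1 /\
       mu (ball rho x0 r0) = Some m0 /\ mu (ball rho x1 r1) = Some m1 /\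
       m1 > N * m0).
Proof.
  intros H. split.
  - apply (inf_dir X rho A0 M mu C H).
  - intros HN Hf. exact (fin_dir X rho A0 M mu C H Hf HN).
Qed.
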